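(* Let $G=(V,E)$ be a connected undirected graph on $n\geq 3$ nodes with positive edge weights $w$, and run the distributed algorithm described in the context synchronously at every node. Then every node $v\in V$ computes its betweenness centrality after $2\,\mathcal{D}(G)+1$ phases: at any time after the first $2\,\mathcal{D}(G)+1$ phases have been completed, the variable $C$ held by $v$ equals $\sum_{s\neq v}\mathsf{bc}_v(s)=(n-1)(n-2)\,\mathsf{bc}_v$, i.e. $\mathsf{bc}_v$ up to the normalization factor $1/((n-1)(n-2))$.
   Context: Graph notions. $G=(V,E)$ is connected, undirected, with weights $w(e)>0$; $N(v)$ is the set of neighbors of $v$ and $N[v]=N(v)\cup\{v\}$. The length of a path is the sum of its edge weights; $\mathrm{dist}(s,t)$ is the length of a shortest $s$–$t$ path. For $s\neq t$, $\mathrm{maxhop}(s,t)$ is the maximum number of edges of a shortest (minimum-length) $s$–$t$ path, $\mathrm{maxhop}(s,s)=0$, and $\mathcal{D}(G)=\max_{s,t\in V}\mathrm{maxhop}(s,t)$. $\sigma_{s,t}$ is the number of shortest $s$–$t$ paths ($\sigma_{s,s}=1$) and $\sigma_{s,t}(v)$ the number of those passing through $v$ ($\sigma_{s,s}(s)=1$). For $s\in V$, $\mathsf{bc}_v(s)=\sum_{t\neq v}\sigma_{s,t}(v)/\sigma_{s,t}$, and the betweenness centrality is $\mathsf{bc}_v=\frac{1}{(n-1)(n-2)}\sum_{s\neq v,t\neq v}\sigma_{s,t}(v)/\sigma_{s,t}$. Algorithm (at each node $v$). Initialization: for all $t\in V$: $D[t]=+\infty$, $\mathrm{NH}[t]=\mathrm{PH}[t]=\emptyset$,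 and for all $u\in N[v]$: $B[u,t]=0$, $S[u,t]=0$; then $S[v,v]=1$, $D[v]=0$. Execution proceeds in synchronous phases; in each phase every node $v$ sends, for every $t\in V$, the message $(t,D[t],S[v,t],B[v,t])$ to every neighbor, receives all messages sent to it by its neighbors in that phase, and processes each of them (in arbitrary order) as follows. On receipt of $(t,d,s,b)$ from $u\in N(v)$: remove $u$ from $\mathrm{NH}[t]$ and from $\mathrm{PH}[t]$; if $d+w(\{u,v\})<D[t]$ set $D[t]\leftarrow d+w(\{u,v\})$; else if $d+w(\{u,v\})=D[t]$ add $u$ to $\mathrm{NH}[t]$; else if $d-w(\{u,v\})=D[t]$ add $u$ to $\mathrm{PH}[t]$. Then set $S[u,t]\leftarrow s$, $B[u,t]\leftarrow b$; if $t\neq v$ set $S[v,t]\leftarrow\sum_{x\in\mathrm{NH}[t]}S[x,t]$; set $B[v,t]\leftarrow S[v,t]\cdot\sum_{x\in\mathrm{PH}[t]}\frac{B[x,t]+1}{S[x,t]}$ (a term with $S[x,t]=0$ is taken as $0$); finally set $C\leftarrow\sum_{x\neq v}B[v,x]$. *)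

(* Defs.v *)
From HB Require Import structures.
From mathcomp Require Import all_boot all_order all_algebra.
From mathcomp Require Import constructive_ereal.
Set Implicit Arguments. Unset Strict Implicit. Unset Printing Implicit Defensive.
Import Order.TTheory GRing.Theory Num.Theory.
Local Open Scope ring_scope.

Section Graph.
Variables (R : realFieldType) (V : finType) (adj : rel V) (w : V -> V -> R).

(** A (simple) path from s is represented by the list p of the vertices
    following s; the full vertex sequence is s :: p. *)
Definition is_spath (s t : V) (p : seq V) : bool :=
  [&& path adj s p, last s p == t & uniq (s :: p)].

Definition plen (s : V) (p : seq V) : R :=
  \sum_(e <- zip (s :: p) p) w e.1 e.2.

Fixpoint allseqs (k : nat) : seq (seq V) :=
  if k is k'.+1 then [::] :: [seq x :: p | x <- enum V, p <- allseqs k']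
  else [:: [::]].

(** All simple s-t paths (simple paths have at most #|V| vertices). *)
Definition spaths (s t : V) : seq (seq V) :=
  undup [seq p <- allseqs #|V| | is_spath s t p].

Definition shortest_paths (s t : V) : seq (seq V) :=
  [seq p <- spaths s t | all (fun q => plen s p <= plen s q) (spaths s t)].

Definition sigma (s t : V) : nat := size (shortest_paths s t).
Definition sigma_through (s t v : V) : nat :=
  count (fun p => v \in s :: p) (shortest_paths s t).

Definition maxhop (s t : V) : nat := \max_(p <- shortest_paths s t) size p.
Definition diamD : nat := \max_(s : V) \max_(t : V) maxhop s t.

Definition bcs (v s : V) : R :=
  \sum_(t | t != v) ((sigma_through s t v)%:R / (sigma s t)%:R).
Definition bc (v : V) : R :=
  (((#|V| - 1) * (#|V| - 2))%:R)^-1 *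
  \sum_(s | s != v) \sum_(t | t != v) ((sigma_through s t v)%:R / (sigma s t)%:R).

Local Open Scope ereal_scope.

Record nstate := NState {
  Dv  : V -> \bar R;
  NHv : V -> {set V};
  PHv : V -> {set V};
  Sv  : V -> V -> R;
  Bv  : V -> V -> R;
  Cv  : R
}.

Definition init_state (C0 : V -> R) (v : V) : nstate :=
  NState (fun t => if t == v then 0%E else +oo)
         (fun _ => set0) (fun _ => set0)
         (fun u t => if (u == v) && (t == v) then 1%R else 0%R)
         (fun _ _ => 0%R) (C0 v).

Definition process (v u t : V) (d : \bar R) (s b : R) (st : nstate) : nstate :=
  let wuv := (w u v)%:E in
  let NH1 := NHv st t :\ u in
  let PH1 := PHv st t :\ u in
  let Dt := Dv st t in
  let '(Dt2, NH2, PH2) :=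
    if d + wuv < Dt then (d + wuv, NH1, PH1)
    else if d + wuv == Dt then (Dt, u |: NH1, PH1)
    else if d - wuv == Dt then (Dt, NH1, u |: PH1)
    else (Dt, NH1, PH1) in
  let D' := fun a => if a == t then Dt2 else Dv st a in
  let NH' := fun a => if a == t then NH2 else NHv st a in
  let PH' := fun a => if a == t then PH2 else PHv st a in
  let S1 := fun x y => if (x == u) && (y == t) then s else Sv st x y in
  let B1 := fun x y => if (x == u) && (y == t) then b else Bv st x y in
  let S2 := if t != v then
              (fun x y => if (x == v) && (y == t)
                          then (\sum_(x' in NH2) S1 x' t)%R else S1 x y)
            else S1 in
  let Bvt := (S2 v t * \sum_(x' in PH2)
                 (if S2 x' t == 0%R then 0%R else (B1 x' t + 1) / S2 x' t))%R in
  let B2 := fun x y => if (x == v) && (y == t) then Bvt else B1 x y in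
  NState D' NH' PH' S2 B2 (\sum_(x | x != v) B2 v x)%R.

Definition inbox (v : V) : seq (V * V) :=
  [seq ut <- [seq (u, t) | u <- enum V, t <- enum V] | adj v ut.1].

(** One synchronous phase at node v: all messages are those sent by the
    neighbours from their states at the beginning of the phase; they are
    processed in the order [ord] (an arbitrary ordering of the inbox). *)
Definition phase_node (net : V -> nstate) (v : V) (ord : seq (V * V)) : nstate :=
  foldl (fun st ut =>
           let u := ut.1 in let t := ut.2 in
           process v u t (Dv (net u) t) (Sv (net u) u t) (Bv (net u) u t) st)
        (net v) ord.

Fixpoint run (C0 : V -> R) (sched : nat -> V -> seq (V * V)) (k : nat)
  : V -> nstate :=
  if k is k'.+1 then
    let net := run C0 sched k' in fun v => phase_node net v (sched k' v)
  else init_state C0.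

End Graph.

(* Main.v *)
Require Import Defs.
From HB Require Import structures.
From mathcomp Require Import all_boot all_order all_algebra.
From mathcomp Require Import constructive_ereal.
From mathcomp Require Import ring lra zify.
Set Implicit Arguments. Unset Strict Implicit. Unset Printing Implicit Defensive.
Import Order.TTheory GRing.Theory Num.Theory.
Local Open Scope ring_scope.
Section Graph1.
Variables (R : realFieldType) (V : finType) (adj : rel V) (w : V -> V -> R).
Hypothesis adj_sym : symmetric adj.
Hypothesis adj_irr : irreflexive adj.
Hypothesis w_sym : forall u v, adj u v -> w u v = w v u.
Hypothesis w_pos : forall u v, adj u v -> 0 < w u v.
Hypothesis conn : forall s t, connect adj s t.

Local Notation plen := (plen w).
Local Notation SP := (shortest_paths adj w).

Lemma plen_nil s : plen s [::] = 0.
Proof. by rewrite /plen /= big_nil. Qed.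

Lemma plen_cons s u q : plen s (u :: q) = w s u + plen u q.
Proof. by rewrite /plen /= big_cons. Qed.

Lemma plen_cat x a b : plen x (a ++ b) = plen x a + plen (last x a) b.
Proof.
elim: a x => [|y a IH] x /=; first by rewrite plen_nil add0r.
by rewrite !plen_cons IH addrA.
Qed.

Lemma plen_ge0 x p : path adj x p -> 0 <= plen x p.
Proof.
elim: p x => [|y p IH] x /=; first by rewrite plen_nil.
case/andP=> hxy hp; rewrite plen_cons addr_ge0 //; last exact: IH.
exact: ltW (w_pos hxy).
Qed.

Lemma suffix_lt x p y : path adj x p -> y \in p ->
  exists b, [/\ path adj y b, last y b = last x p & plen y b < plen x p].
Proof.
move=> hp hy; move: hp; case/splitPr: hy => p1 p2; rewrite cat_path /= => /and3P [h1 hy h2].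
exists p2; split => //; first by rewrite last_cat.
rewrite plen_cat plen_cons addrA ltrDr.
by rewrite ltr_wpDl ?plen_ge0 ?w_pos.
Qed.

Lemma mem_allseqs k p : (p \in allseqs V k) = (size p <= k)%N.
Proof.
elim: k p => [|k IH] [|x p] //=.
rewrite inE /= ltnS -IH; apply/idP/idP.
  by case/allpairsP => [[y q] /= [_ hq [_ ->]]].
by move=> hp; apply/allpairsP; exists (x, p); rewrite mem_enum.
Qed.

Lemma mem_spaths s t p : (p \in spaths adj s t) = is_spath adj s t p.
Proof.
rewrite /spaths mem_undup mem_filter mem_allseqs andb_idr //.
case/and3P=> _ _ hu.
have := card_uniqP hu => /= hc.
have : (#|s :: p| <= #|V|)%N by apply: max_card.
by rewrite hc /= => /ltnW.
Qed.

Lemma exists_spath s t : exists p, is_spath adj s t p.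
Proof.
have /connectP [p hp ->] := conn s t.
case: (shortenP hp) => q hq hu _.
by exists q; rewrite /is_spath hq hu eqxx.
Qed.

Lemma argmin_seq (T : eqType) (f : T -> R) (l : seq T) : l != [::] ->
  exists2 x, x \in l & all (fun y => f x <= f y) l.
Proof.
elim: l => [|a l IH] // _.
case: (altP (l =P [::])) => [->|hl].
  by exists a; rewrite ?inE //= lexx.
have [x hx hall] := IH hl.
case: (lerP (f a) (f x)) => h.
- exists a; first by rewrite inE eqxx.
  rewrite /= lexx /=; apply/allP => y hy; apply: le_trans h _.
  exact: (allP hall).
- exists x; first by rewrite inE hx orbT.
  by rewrite /= hall (ltW h).
Qed.

Lemma SP_nonempty s t : exists p, p \in SP s t.
Proof.
have [p hp] := exists_spath s t.
have hne : spaths adj s t != [::].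
  by apply/eqP => he; move: hp; rewrite -mem_spaths he.
have [x hx hall] := argmin_seq (plen s) hne.
by exists x; rewrite /shortest_paths mem_filter hx andbT.
Qed.

Definition dist s t := plen s (head [::] (SP s t)).

Lemma head_SP s t : head [::] (SP s t) \in SP s t.
Proof.
have [p hp] := SP_nonempty s t.
by case: (SP s t) hp => //= a l _; rewrite inE eqxx.
Qed.

Lemma SP_spath s t p : p \in SP s t -> is_spath adj s t p.
Proof. by rewrite mem_filter => /andP [_]; rewrite mem_spaths. Qed.

Lemma SP_min s t p q : p \in SP s t -> is_spath adj s t q -> plen s p <= plen s q.
Proof.
rewrite mem_filter => /andP [/allP h _] hq.
by apply: h; rewrite mem_spaths.
Qed.

Lemma dist_SP s t p : p \in SP s t -> plen s p = dist s t.
Proof.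
move=> hp; have hh := head_SP s t.
apply/eqP; rewrite eq_le /dist.
by rewrite (SP_min hh (SP_spath hp)) (SP_min hp (SP_spath hh)).
Qed.

Lemma dist_le_spath s t q : is_spath adj s t q -> dist s t <= plen s q.
Proof. move=> hq; rewrite /dist; exact: SP_min (head_SP s t) hq. Qed.

Lemma SP_char s t p :
  (p \in SP s t) = is_spath adj s t p && (plen s p == dist s t).
Proof.
apply/idP/idP.
  by move=> hp; rewrite SP_spath // (dist_SP hp) eqxx.
case/andP=> hp /eqP hd; rewrite /shortest_paths mem_filter mem_spaths hp andbT.
apply/allP => q; rewrite mem_spaths => hq; rewrite hd; exact: dist_le_spath.
Qed.

Lemma dist_ge0 s t : 0 <= dist s t.
Proof.
rewrite /dist; have /SP_spath/and3P [h _ _] := head_SP s t.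
exact: plen_ge0.
Qed.

Lemma spath_tt t p : is_spath adj t t p -> p = [::].
Proof.
case: p => // y p /and3P [_ /eqP hl hu].
move: hu; rewrite /= => /andP [ht _].
move: ht; rewrite -hl /=.
have : last y p \in y :: p by exact: mem_last.
by move=> -> .
Qed.

Lemma SP_tt t : SP t t = [:: [::]].
Proof.
have hu : uniq (SP t t) by rewrite filter_uniq // undup_uniq.
have hm : SP t t =i [:: [::]].
  move=> p; rewrite inE; apply/idP/eqP.
    by move/SP_spath/spath_tt.
  move=> ->; have [q hq] := SP_nonempty t t.
  by have := SP_spath hq => /spath_tt hq0; rewrite -hq0.
have := @uniq_perm _ _ [:: [::]] hu (erefl true) hm => /perm_size hs.
move: hm hs; case: (SP t t) => [|a [|b l]] //= hm _.
by have := hm a; rewrite !inE eqxx => /esym/eqP ->.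
Qed.

Lemma dist_tt t : dist t t = 0.
Proof. by rewrite /dist SP_tt /= plen_nil. Qed.

Lemma dist_tri s u t : adj s u -> dist s t <= w s u + dist u t.
Proof.
move=> hsu; have hr := head_SP u t; set r := head [::] (SP u t) in hr.
have /and3P [hpr /eqP hlr hur] := SP_spath hr.
have hdr : plen u r = dist u t by rewrite /dist.
case: (boolP (s \in u :: r)) => hs.
- have hsu' : s != u by apply/eqP => e; move: hsu; rewrite e adj_irr.
  move: hs; rewrite inE (negbTE hsu') /= => hs.
  move: (hs) => /splitPr hspl; move: hspl hpr hlr hur hdr.
  case=> r1 r2 hpr hlr hur hdr.
  have hsp : is_spath adj s t r2.
    rewrite /is_spath.
    move: hpr; rewrite cat_path /= => /and3P [_ _ ->] /=.
    rewrite -hlr last_cat /= eqxx /=.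
    by move: hur; rewrite -cat_cons cat_uniq => /and3P [_ _].
  apply: le_trans (dist_le_spath hsp) _.
  rewrite -hdr plen_cat plen_cons.
  have h1 : 0 <= plen u r1.
    by move: hpr; rewrite cat_path => /andP [/plen_ge0].
  have h2 : 0 <= w (last u r1) s.
    by move: hpr; rewrite cat_path /= => /and3P [_ /w_pos/ltW].
  have h3 : 0 < w s u := w_pos hsu.
  lra.
- have hsp : is_spath adj s t (u :: r).
    apply/and3P; split; first by rewrite /= hsu hpr.
      by rewrite /= hlr.
    by rewrite cons_uniq hs hur.
  by apply: le_trans (dist_le_spath hsp) _; rewrite plen_cons hdr.
Qed.

Lemma dist_walk s t q : path adj s q -> last s q = t -> dist s t <= plen s q.
Proof.
elim: q s => [|u q IH] s /=.
  by move=> _ ->; rewrite dist_tt plen_nil.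
case/andP=> hsu hq hl.
apply: le_trans (dist_tri t hsu) _.
by rewrite plen_cons lerD2l IH.
Qed.


Lemma mem_zip2 (T1 T2 : eqType) (l1 : seq T1) (l2 : seq T2) a b :
  (a, b) \in zip l1 l2 -> (a \in l1) && (b \in l2).
Proof.
elim: l1 l2 => [|x l1 IH] [|y l2] //=.
rewrite inE => /orP [/eqP [-> ->]|/IH /andP [h1 h2]].
  by rewrite !inE !eqxx.
by rewrite !inE h1 h2 !orbT.
Qed.

Lemma SP_uniq s t : uniq (SP s t).
Proof. by rewrite filter_uniq // undup_uniq. Qed.

Section Target.
Variable t : V.

Definition NHs s := [set u | adj s u & dist u t + w u s == dist s t].
Definition PHs v := [set x | adj v x & dist x t - w x v == dist v t].

Lemma inNH s u : (u \in NHs s) = adj s u && (dist u t + w u s == dist s t).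
Proof. by rewrite inE. Qed.
Lemma inPH v x : (x \in PHs v) = adj v x && (dist x t - w x v == dist v t).
Proof. by rewrite inE. Qed.

Lemma NH_lt s u : u \in NHs s -> dist u t < dist s t.
Proof.
rewrite inNH => /andP [h /eqP <-].
by rewrite ltrDl w_pos // adj_sym.
Qed.

Lemma NH_PH s v : (v \in NHs s) = (s \in PHs v).
Proof.
rewrite inNH inPH adj_sym; case: (boolP (adj v s)) => //= h.
rewrite (w_sym h); apply/eqP/eqP => <-; lra.
Qed.

Lemma NHs_t : NHs t = set0.
Proof.
apply/setP => u; rewrite inNH inE dist_tt.
apply/negP => /andP [h /eqP e].
have := dist_ge0 u t; have := w_pos (h : adj t u); rewrite adj_sym in h.
have := w_pos h; lra.
Qed.

Lemma notin_sp s u q : u \in NHs s -> q \in SP u t -> s \notin u :: q.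
Proof.
move=> hu hq; apply/negP => hs.
have hsu : adj s u by move: hu; rewrite inNH => /andP [].
have /and3P [hpq /eqP hlq _] := SP_spath hq.
move: hs; rewrite inE => /orP [/eqP e|hs].
  by move: hsu; rewrite e adj_irr.
have [b [hb hlb hlt]] := suffix_lt hpq hs.
have := dist_walk hb (etrans hlb hlq).
have := dist_SP hq; have := NH_lt hu; have := w_pos hsu.
move: hu; rewrite inNH => /andP [_ /eqP e].
lra.
Qed.

Lemma SP_consI s u q : u \in NHs s -> q \in SP u t -> u :: q \in SP s t.
Proof.
move=> hu hq; have hn := notin_sp hu hq.
have hsu : adj s u by move: hu; rewrite inNH => /andP [].
have /and3P [hpq hlq huq] := SP_spath hq.
rewrite SP_char; apply/andP; split.
  apply/and3P; split; first by rewrite /= hsu hpq.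
    by [].
  by rewrite cons_uniq hn huq.
rewrite plen_cons (dist_SP hq).
move: hu; rewrite inNH => /andP [_ /eqP <-].
by rewrite (w_sym hsu) addrC.
Qed.

Lemma SP_consE s p : s != t -> p \in SP s t ->
  exists u q, [/\ p = u :: q, u \in NHs s & q \in SP u t].
Proof.
move=> hst hp; have /and3P [hpp /eqP hlp hup] := SP_spath hp.
case: p hp hpp hlp hup => [|u q] hp hpp hlp hup.
  by move: hst; rewrite -hlp /= eqxx.
move: hpp => /= /andP [hsu hq].
have hsq : is_spath adj u t q.
  apply/and3P; split => //; first by rewrite -hlp.
  by move: hup => /= /andP [_].
have h1 := dist_le_spath hsq.
have h2 := dist_tri t hsu.
have h3 := dist_SP hp; rewrite plen_cons in h3.
have hq' : plen u q = dist u t by lra.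
exists u, q; split => //.
  by rewrite inNH hsu /= -(w_sym hsu); apply/eqP; lra.
by rewrite SP_char hsq hq' eqxx.
Qed.

Lemma count_partition (l : seq (seq V)) (A : {set V}) (phi : pred (seq V)) :
  (forall p, p \in l -> exists2 h, h \in A & ohead p = Some h) ->
  count phi l = \sum_(u in A) count (fun p => (ohead p == Some u) && phi p) l.
Proof.
elim: l => [|p l IH] hl /=.
  by rewrite big1.
rewrite big_split /= -IH; last by move=> q hq; apply: hl; rewrite inE hq orbT.
congr (_ + _)%N.
have [h hA hh] := hl p (mem_head _ _).
rewrite (bigD1 h) //= hh eqxx /= big1 => [|u /andP [_ hu]]; first by case: (phi p).
by case: eqP => // [[e]]; move: hu; rewrite e eqxx.
Qed.

Lemma count_SP s (phi : pred (seq V)) : s != t ->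
  count phi (SP s t) = \sum_(u in NHs s) count (fun q => phi (u :: q)) (SP u t).
Proof.
move=> hst.
rewrite (@count_partition _ (NHs s)); last first.
  move=> p hp; have [u [q [-> hu _]]] := SP_consE hst hp.
  by exists u.
apply: eq_bigr => u hu.
transitivity (count phi [seq x <- SP s t | ohead x == Some u]).
  by rewrite [RHS]count_filter; apply: eq_in_count => p _; rewrite /= andbC.
have hperm : perm_eq [seq x <- SP s t | ohead x == Some u] [seq u :: q | q <- SP u t].
  apply: uniq_perm.
  - by rewrite filter_uniq // SP_uniq.
  - by rewrite map_inj_uniq ?SP_uniq // => a b [].
  move=> p; rewrite mem_filter; apply/andP/mapP.
    case=> /eqP ho hp; have [u' [q [e hu' hq]]] := SP_consE hst hp.
    by exists q; move: ho; rewrite e /= => [[<-]].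
  by case=> q hq ->; rewrite /= eqxx SP_consI.
apply: etrans (elimT permP hperm phi) _; by rewrite count_map.
Qed.

Lemma sigmaE s : sigma adj w s t = size (SP s t).
Proof. by []. Qed.

Lemma sigma_rec s : s != t ->
  sigma adj w s t = (\sum_(u in NHs s) sigma adj w u t)%N.
Proof.
move=> hst; rewrite sigmaE -count_predT count_SP //.
Qed.

Lemma sigma_tt : sigma adj w t t = 1%N.
Proof. by rewrite sigmaE SP_tt. Qed.

Lemma sigma_pos s : (0 < sigma adj w s t)%N.
Proof.
have [p hp] := SP_nonempty s t.
by rewrite sigmaE; case: (SP s t) hp.
Qed.

Definition thr s x := count (fun p => x \in s :: p) (SP s t).
Definition ec s x v := count (fun p => (x, v) \in zip (s :: p) p) (SP s t).

Lemma thrE s x : sigma_through adj w s t x = thr s x.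
Proof. by []. Qed.

Definition msr s := #|[set y | dist y t < dist s t]|.

Lemma msr_lt s u : u \in NHs s -> (msr u < msr s)%N.
Proof.
move=> hu; apply: proper_card; apply/properP; split.
  by apply/subsetP => y; rewrite !inE => h; apply: lt_trans h (NH_lt hu).
by exists u; rewrite !inE ?ltxx ?NH_lt.
Qed.

Lemma msr_ind (P : V -> Prop) :
  (forall s, (forall u, u \in NHs s -> P u) -> P s) -> forall s, P s.
Proof.
move=> IH s.
suff : forall n s, (msr s < n)%N -> P s by apply; exact: ltnSn.
elim=> [|n IHn] s' // hs'; apply: IH => u hu; apply: IHn.
by apply: leq_trans (msr_lt hu) _.
Qed.

Lemma thr_rec s x : s != t -> s != x ->
  thr s x = (\sum_(u in NHs s) thr u x)%N.
Proof.
move=> hst hsx; rewrite /thr count_SP //; apply: eq_bigr => u _.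
by apply: eq_in_count => q _; rewrite inE eq_sym (negbTE hsx).
Qed.

Lemma thr_t x : x != t -> thr t x = 0%N.
Proof. by move=> hx; rewrite /thr SP_tt /= inE (negbTE hx). Qed.

Lemma thr_self x : thr x x = sigma adj w x t.
Proof. by rewrite /thr sigmaE -count_predT; apply: eq_in_count => p _; rewrite mem_head. Qed.

Lemma ec_rec s x v : s != t -> s != x ->
  ec s x v = (\sum_(u in NHs s) ec u x v)%N.
Proof.
move=> hst hsx; rewrite /ec count_SP //; apply: eq_bigr => u _.
apply: eq_in_count => q _ /=; rewrite inE.
by case: eqP => // [[e _]]; move: hsx; rewrite e eqxx.
Qed.

Lemma ec_t x v : ec t x v = 0%N.
Proof. by rewrite /ec SP_tt. Qed.

Lemma ec_self x v :
  ec x x v = if v \in NHs x then sigma adj w v t else 0%N.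
Proof.
case: (eqVneq x t) => [->|hxt].
  by rewrite /ec SP_tt NHs_t inE.
rewrite /ec count_SP //.
rewrite (eq_bigr (fun u => if u == v then sigma adj w u t else 0%N)); last first.
  move=> u hu; rewrite sigmaE -count_predT.
  case: eqP => [->|hne].
    by apply: eq_in_count => q hq /=; rewrite inE eqxx.
  rewrite -(count_pred0 (SP u t)); apply: eq_in_count => q hq /=.
  rewrite inE; case: eqP => [[e]|_] //=; first by move: hne; rewrite e.
  apply/negP => /mem_zip2 /andP [h _].
  by have := notin_sp hu hq; rewrite h.
case: (boolP (v \in NHs x)) => hv.
  rewrite (bigD1 v) //= eqxx big1 => [|u /andP [_ hu]]; first exact: addn0.
  by rewrite (negbTE hu).
by rewrite big1 // => u hu; case: eqP => // e; move: hv; rewrite -e hu.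
Qed.

Lemma ec_prod x v s :
  (ec s x v * sigma adj w x t =
   thr s x * (if v \in NHs x then sigma adj w v t else 0))%N.
Proof.
elim/msr_ind: s => s IH.
case: (eqVneq s x) => [->|hsx].
  by rewrite ec_self thr_self mulnC.
case: (eqVneq s t) => [est|hst].
  by rewrite est ec_t thr_t // eq_sym -est.
rewrite ec_rec // thr_rec // !big_distrl /=.
by apply: eq_bigr => u hu; rewrite IH.
Qed.

Lemma thr_dec v s : v != t -> s != v ->
  thr s v = (\sum_(x in PHs v) ec s x v)%N.
Proof.
move=> hvt; elim/msr_ind: s => s IH hsv.
case: (eqVneq s t) => [->|hst].
  by rewrite thr_t //; symmetry; apply: big1 => x _; apply: ec_t.
rewrite thr_rec //.
rewrite [RHS](eq_bigr (fun x => \sum_(u in NHs s)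
   count (fun q => ((x, v) == (s, u)) || ((x, v) \in zip (u :: q) q)) (SP u t))%N);
  last first.
  by move=> x _; rewrite /ec (count_SP (fun p => (x, v) \in zip (s :: p) p) hst).
rewrite exchange_big /=; apply: eq_bigr => u hu.
case: (eqVneq u v) => [euv|huv].
  rewrite euv thr_self.
  have hs : s \in PHs v by rewrite -NH_PH -euv.
  rewrite (bigD1 s) //= big1 => [|x].
    rewrite sigmaE -count_predT addn0; apply: eq_in_count => q _; by rewrite eqxx.
  move=> /andP [_ hxs]; rewrite -(count_pred0 (SP v t)).
  apply: eq_in_count => q hq /=.
  rewrite xpair_eqE (negbTE hxs) /=; apply/negP => /mem_zip2 /andP [_ hv].
  have /and3P [_ _] := SP_spath hq; rewrite cons_uniq => /andP [hn _].
  by rewrite hv in hn.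
rewrite IH //; apply: eq_bigr => x _; apply: eq_in_count => q _.
by rewrite xpair_eqE (eq_sym v u) (negbTE huv) andbF.
Qed.

Lemma thr_PH v x : x \in PHs v -> thr v x = 0%N.
Proof.
move=> hx; rewrite /thr -(count_pred0 (SP v t)); apply: eq_in_count => p hp /=.
apply/negP; rewrite inE => /orP [/eqP e|hxp].
  by move: hx; rewrite e inPH adj_irr.
have /and3P [hpp /eqP hlp _] := SP_spath hp.
have [b [hb hlb hlt]] := suffix_lt hpp hxp.
have := dist_walk hb (etrans hlb hlp).
have := dist_SP hp.
move: hx; rewrite inPH => /andP [ha /eqP e].
have := w_pos (ha : adj v x); rewrite adj_sym in ha; have := w_pos ha.
lra.
Qed.

End Target.
Definition delta t v : R :=
  \sum_(s | s != v) (thr t s v)%:R / (sigma adj w s t)%:R.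

Lemma sigma_neq0 s t : (sigma adj w s t)%:R != 0 :> R.
Proof. by rewrite pnatr_eq0 -lt0n sigma_pos. Qed.

Lemma brandes t v : v != t ->
  delta t v = (sigma adj w v t)%:R *
     \sum_(x in PHs t v) ((delta t x + 1) / (sigma adj w x t)%:R).
Proof.
move=> hvt; rewrite {1}/delta.
under eq_bigr => s hs do rewrite (thr_dec hvt hs) natr_sum mulr_suml.
rewrite exchange_big mulr_sumr /=.
apply: eq_bigr => x hx.
have hvx : v \in NHs t x by rewrite NH_PH.
have hsx := sigma_neq0 x t.
have e : forall s, (ec t s x v)%:R / (sigma adj w s t)%:R =
   (thr t s x)%:R / (sigma adj w s t)%:R *
   ((sigma adj w v t)%:R / (sigma adj w x t)%:R) :> R.
  move=> s; have := ec_prod t x v s; rewrite hvx => /(congr1 (fun n => n%:R : R)).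
  rewrite !natrM => h.
  have hec : (ec t s x v)%:R = (thr t s x)%:R * (sigma adj w v t)%:R /
     (sigma adj w x t)%:R :> R by rewrite -h mulfK.
  rewrite hec; have := sigma_neq0 s t => hss; field.
  by rewrite hss hsx.
under eq_bigr => s _ do rewrite e.
rewrite -mulr_suml.
have hsum : \sum_(s | s != v) (thr t s x)%:R / (sigma adj w s t)%:R = delta t x + 1.
  have hall : \sum_s (thr t s x)%:R / (sigma adj w s t)%:R =
      \sum_(s | s != v) (thr t s x)%:R / (sigma adj w s t)%:R :> R.
    by rewrite (bigD1 v) //= thr_PH // mul0r add0r.
  by rewrite -hall (bigD1 x) //= thr_self divff // addrC.
by rewrite hsum mulrCA.
Qed.
Lemma mh_ge s t p : p \in SP s t -> (size p <= maxhop adj w s t)%N.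
Proof. by move=> hp; apply: (leq_bigmax_seq (F := size) p hp). Qed.

Lemma mh_NH t s u : u \in NHs t s -> (maxhop adj w u t < maxhop adj w s t)%N.
Proof.
move=> hu; have [q0 hq0] := SP_nonempty u t.
have hb : forall q, q \in SP u t -> (size q < maxhop adj w s t)%N.
  by move=> q hq; apply: (mh_ge (SP_consI hu hq)).
have h0 := hb q0 hq0.
have hpos : (0 < maxhop adj w s t)%N := leq_ltn_trans (leq0n _) h0.
have : (maxhop adj w u t <= (maxhop adj w s t).-1)%N.
  by apply/bigmax_leqP_seq => q hq _; rewrite -ltnS prednK //; exact: hb.
by rewrite -(prednK hpos) ltnS.
Qed.

Lemma mh_le_D s t : (maxhop adj w s t <= diamD adj w)%N.
Proof.
rewrite /diamD; apply: leq_trans (leq_bigmax s).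
exact: (leq_bigmax (F := fun t => maxhop adj w s t) t).
Qed.

Lemma mh_PH t v x : x \in PHs t v -> (maxhop adj w v t < maxhop adj w x t)%N.
Proof. by rewrite -NH_PH => /mh_NH. Qed.

Lemma PH_neq_t t v x : x \in PHs t v -> x != t.
Proof.
rewrite inPH => /andP [ha /eqP e]; apply/eqP => ex.
move: e; rewrite ex dist_tt => e.
have := dist_ge0 v t; have := w_pos (ha : adj v x); rewrite adj_sym in ha.
have := w_pos ha; rewrite ex; lra.
Qed.

Lemma SP_size_le s t : exists2 p, p \in SP s t & (size p <= maxhop adj w s t)%N.
Proof. by have [p hp] := SP_nonempty s t; exists p => //; apply: mh_ge. Qed.

Lemma has_neighbor v : (1 < #|V|)%N -> exists u, adj v u.
Proof.
move=> hV.
have [y hy] : exists y, y != v.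
  case: (pickP (predC1 v)) => [y hy|h]; first by exists y.
  have hs : [set: V] \subset [set v].
    by apply/subsetP => y _; have := h y; rewrite !inE /= => /negbFE.
  by have := subset_leq_card hs; rewrite cardsT cards1; lia.
have /connectP [p hp ey] := conn v y.
case: p hp ey => [|u p] /=; first by move=> _ e; move: hy; rewrite e eqxx.
by case/andP => h _ _; exists u.
Qed.
Section Alg.
Local Notation st_t := (nstate R V).

Lemma process_eq v u t d s b (st : st_t) :
  process w v u t d s b st =
  let wuv := (w u v)%:E in
  let NH1 := NHv st t :\ u in
  let PH1 := PHv st t :\ u in
  let Dt := Dv st t in
  let c1 := (d + wuv < Dt)%E in
  let c2 := (d + wuv == Dt)%E in
  let c3 := (d - wuv == Dt)%E in
  let Dt2 := if c1 then (d + wuv)%E else Dt in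
  let NH2 := if c1 then NH1 else if c2 then u |: NH1 else NH1 in
  let PH2 := if c1 then PH1 else if c2 then PH1 else if c3 then u |: PH1 else PH1 in
  let D' := fun a => if a == t then Dt2 else Dv st a in
  let NH' := fun a => if a == t then NH2 else NHv st a in
  let PH' := fun a => if a == t then PH2 else PHv st a in
  let S1 := fun x y => if (x == u) && (y == t) then s else Sv st x y in
  let B1 := fun x y => if (x == u) && (y == t) then b else Bv st x y in
  let S2 := if t != v then
              (fun x y => if (x == v) && (y == t)
                          then (\sum_(x' in NH2) S1 x' t)%R else S1 x y)
            else S1 in
  let Bvt := (S2 v t * \sum_(x' in PH2)
                 (if S2 x' t == 0%R then 0%R else (B1 x' t + 1) / S2 x' t))%R in
  let B2 := fun x y => if (x == v) && (y == t) then Bvt else B1 x y in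
  NState D' NH' PH' S2 B2 (\sum_(x | x != v) B2 v x)%R.
Proof.
rewrite /process /=.
case: (d + (w u v)%:E < Dv st t)%E => //.
case: (d + (w u v)%:E == Dv st t)%E => //.
by case: (d - (w u v)%:E == Dv st t)%E.
Qed.


Definition fS (st : nstate R V) t x : R :=
  if Sv st x t == 0 then 0 else (Bv st x t + 1) / Sv st x t.

Section PFields.
Variables (v u t : V) (d : \bar R) (s b : R) (st : nstate R V).
Local Notation P := (process w v u t d s b st).
Local Notation c1 := (d + (w u v)%:E < Dv st t)%E.
Local Notation c2 := (d + (w u v)%:E == Dv st t)%E.
Local Notation c3 := (d - (w u v)%:E == Dv st t)%E.

Lemma pD a : Dv P a = if a == t then (if c1 then (d + (w u v)%:E)%E else Dv st t) else Dv st a.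
Proof. by rewrite process_eq. Qed.

Lemma pNH a : NHv P a = if a == t then
  (if c1 then NHv st t :\ u else if c2 then u |: (NHv st t :\ u) else NHv st t :\ u)
  else NHv st a.
Proof. by rewrite process_eq. Qed.

Lemma pPH a : PHv P a = if a == t then
  (if c1 then PHv st t :\ u else if c2 then PHv st t :\ u else
   if c3 then u |: (PHv st t :\ u) else PHv st t :\ u)
  else PHv st a.
Proof. by rewrite process_eq. Qed.

Lemma pS_other x y : x != v -> Sv P x y = if (x == u) && (y == t) then s else Sv st x y.
Proof.
move=> hx; rewrite process_eq /=.
by case: ifP => _ //=; rewrite (negbTE hx).
Qed.

Lemma pS_vy y : u != v -> y != t -> Sv P v y = Sv st v y.
Proof.
move=> hu hy; rewrite process_eq /=.
by case: ifP => _ /=; rewrite (negbTE hy) !andbF.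
Qed.

Lemma pS_vv : u != v -> Sv P v v = Sv st v v.
Proof.
move=> hu; rewrite process_eq /=.
case: ifP => htv /=.
  by rewrite (eq_sym v t) (negbTE htv) !andbF.
by rewrite (eq_sym v u) (negbTE hu).
Qed.

Lemma pS_vt : t != v ->
  Sv P v t = \sum_(x in NHv P t) (if x == u then s else Sv st x t).
Proof.
move=> htv; rewrite process_eq /= htv !eqxx /=.
by apply: eq_bigr => x _; rewrite andbT.
Qed.

Lemma pB_other x y : x != v -> Bv P x y = if (x == u) && (y == t) then b else Bv st x y.
Proof. by move=> hx; rewrite process_eq /= (negbTE hx). Qed.

Lemma pB_vy y : y != t -> Bv P v y = Bv st v y.
Proof.
by move=> hy; rewrite process_eq /= eqxx (negbTE hy) /= andbF.
Qed.

Lemma pB_vt : Bv P v t = Sv P v t * \sum_(x in PHv P t)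
   (if Sv P x t == 0 then 0 else ((if x == u then b else Bv st x t) + 1) / Sv P x t).
Proof.
rewrite process_eq /= !eqxx /=; congr (_ * _); apply: eq_bigr => x _.
by rewrite andbT.
Qed.

Lemma pC : Cv P = \sum_(x | x != v) Bv P v x.
Proof. by rewrite process_eq. Qed.

End PFields.
End Alg.
Section Fold.
Variables (net : V -> nstate R V) (v : V).

Definition stp (st : nstate R V) (ut : V * V) :=
  process w v ut.1 ut.2 (Dv (net ut.1) ut.2) (Sv (net ut.1) ut.1 ut.2)
    (Bv (net ut.1) ut.1 ut.2) st.
Definition hasT t (L : seq (V * V)) := has (fun ut => ut.2 == t) L.

Lemma phase_nodeE ord : phase_node w net v ord = foldl stp (net v) ord.
Proof. by []. Qed.

Lemma fold_inv st0 L :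
  all (fun ut => adj v ut.1) L ->
  (forall t, NHv st0 t \subset [set u | adj v u]) ->
  (forall t, PHv st0 t \subset [set u | adj v u]) ->
  let st := foldl stp st0 L in
  [/\ forall t, NHv st t \subset [set u | adj v u],
      forall t, PHv st t \subset [set u | adj v u],
      forall x t, x != v -> Sv st x t = (if (x, t) \in L then Sv (net x) x t else Sv st0 x t),
      forall x t, x != v -> Bv st x t = (if (x, t) \in L then Bv (net x) x t else Bv st0 x t) &
      forall t, t != v -> hasT t L -> Sv st v t = \sum_(x in NHv st t) Sv st x t]
  /\ [/\ Sv st v v = Sv st0 v v,
      forall t, hasT t L -> Bv st v t = Sv st v t * \sum_(x in PHv st t) fS st t x
    & L != [::] -> Cv st = \sum_(x | x != v) Bv st v x].
Proof.
move=> + h1 h2; elim/last_ind: L => [|L [u t] IH] hall /=.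
  by split; split => // x t _; rewrite in_nil.
move: hall; rewrite all_rcons => /andP [/= hut hL].
have [[i1 i2 i3 i4 i5] [i6 i7 i8]] := IH hL.
rewrite foldl_rcons; set st := foldl stp st0 L.
rewrite /stp /=.
set d := Dv (net u) t; set s := Sv (net u) u t; set b := Bv (net u) u t.
have huv : u != v by apply/eqP => e; move: hut; rewrite e adj_irr.
have sub1 : forall A : {set V}, A \subset [set x | adj v x] ->
    (A :\ u) \subset [set x | adj v x] /\ (u |: (A :\ u)) \subset [set x | adj v x].
  move=> A hA; split; apply/subsetP => x; rewrite !inE.
    by case/andP => _ /(subsetP hA); rewrite inE.
  by case/orP => [/eqP -> //|/andP [_ /(subsetP hA)]]; rewrite inE.
have n1 : forall t', NHv (process w v u t d s b st) t' \subset [set x | adj v x].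
  move=> t'; rewrite pNH; case: (t' == t); last exact: i1.
  have [e1 e2] := sub1 _ (i1 t).
  by case: ifP => _ //; case: ifP.
have n2 : forall t', PHv (process w v u t d s b st) t' \subset [set x | adj v x].
  move=> t'; rewrite pPH; case: (t' == t); last exact: i2.
  have [e1 e2] := sub1 _ (i2 t).
  by case: ifP => _ //; case: ifP => _ //; case: ifP.
have nv : forall (A : {set V}) x, A \subset [set x | adj v x] -> x \in A -> x != v.
  move=> A x hA /(subsetP hA); rewrite inE => h.
  by apply/eqP => e; move: h; rewrite e adj_irr.
have hS : forall x t', x != v -> Sv (process w v u t d s b st) x t' =
    (if (x, t') \in rcons L (u, t) then Sv (net x) x t' else Sv st0 x t').
  move=> x t' hx; rewrite pS_other // mem_rcons inE i3 // xpair_eqE.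
  by case: (eqVneq x u) => [->|hxu]; case: (eqVneq t' t) => [->|htt].
have hB : forall x t', x != v -> Bv (process w v u t d s b st) x t' =
    (if (x, t') \in rcons L (u, t) then Bv (net x) x t' else Bv st0 x t').
  move=> x t' hx; rewrite pB_other // mem_rcons inE i4 // xpair_eqE.
  by case: (eqVneq x u) => [->|hxu]; case: (eqVneq t' t) => [->|htt].
split; split => //.
- move=> t'; rewrite /hasT has_rcons /=.
  case: (eqVneq t' t) => [->|htt] /= ht'v hh.
    rewrite pS_vt //.
    apply: eq_bigr => x hx; rewrite pS_other ?eqxx ?andbT //.
    exact: nv _ _ (n1 t) hx.
  rewrite pS_vy // i5 //.
  rewrite pNH (negbTE htt); apply: eq_bigr => x hx.
  by rewrite pS_other ?(negbTE htt) ?andbF //; apply: nv _ _ (i1 t') hx.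
- by rewrite pS_vv.
- move=> t'; rewrite /hasT has_rcons /=.
  case: (eqVneq t' t) => [->|htt] /= hh.
    rewrite pB_vt; congr (_ * _); apply: eq_bigr => x hx.
    rewrite /fS pB_other ?eqxx ?andbT //; exact: nv _ _ (n2 t) hx.
  rewrite pB_vy // i7 //.
  rewrite pS_vy // pPH (negbTE htt); congr (_ * _); apply: eq_bigr => x hx.
  have hxv := nv _ _ (i2 t') hx.
  by rewrite /fS pS_other ?(negbTE htt) ?andbF // pB_other ?(negbTE htt) ?andbF.
- by move=> _; rewrite pC.
Qed.

Lemma fold_D st0 L t :
  (Dv (foldl stp st0 L) t <= Dv st0 t)%E /\
  (forall u, (u, t) \in L ->
     (Dv (foldl stp st0 L) t <= Dv (net u) t + (w u v)%:E)%E).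
Proof.
elim/last_ind: L => [|L [u t'] [IH1 IH2]] /=; first by split.
rewrite foldl_rcons /stp /=.
have hle : (Dv (process w v u t' (Dv (net u) t') (Sv (net u) u t') (Bv (net u) u t')
            (foldl stp st0 L)) t <= Dv (foldl stp st0 L) t)%E.
  by rewrite pD; case: eqP => [->|] //; case: ifP => // /ltW.
split; first exact: le_trans hle IH1.
move=> u'; rewrite mem_rcons inE xpair_eqE => /orP [/andP [/eqP -> /eqP ->]|hL].
  rewrite pD eqxx; case: ifP => // /negbT; by rewrite -leNgt.
exact: le_trans hle (IH2 _ hL).
Qed.

Lemma fold_lb st0 L (lb : V -> \bar R) :
  (forall t, (lb t <= Dv st0 t)%E) ->
  (forall u t, (u, t) \in L -> (lb t <= Dv (net u) t + (w u v)%:E)%E) ->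
  forall t, (lb t <= Dv (foldl stp st0 L) t)%E.
Proof.
move=> h0; elim/last_ind: L => [|L [u t'] IH] hL t /=; first exact: h0.
rewrite foldl_rcons /stp /= pD.
have IH' : forall t, (lb t <= Dv (foldl stp st0 L) t)%E.
  by apply: IH => u0 t0 h; apply: hL; rewrite mem_rcons inE h orbT.
case: eqP => [->|_]; last exact: IH'.
case: ifP => _; last exact: IH'.
by apply: hL; rewrite mem_rcons inE eqxx.
Qed.

Lemma fold_conv st0 L t :
  (forall u, (u, t) \in L -> ~~ (Dv (net u) t + (w u v)%:E < Dv st0 t)%E) ->
  let st := foldl stp st0 L in
  [/\ Dv st t = Dv st0 t,
      NHv st t = (NHv st0 t :\: [set u | (u, t) \in L]) :|:
          [set u | ((u, t) \in L) && (Dv (net u) t + (w u v)%:E == Dv st0 t)%E] &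
      PHv st t = (PHv st0 t :\: [set u | (u, t) \in L]) :|:
          [set u | [&& (u, t) \in L, ~~ (Dv (net u) t + (w u v)%:E == Dv st0 t)%E &
                      (Dv (net u) t - (w u v)%:E == Dv st0 t)%E]]].
Proof.
elim/last_ind: L => [|L [u t'] IH] hL /=.
  by split => //; apply/setP => x; rewrite !inE /= ?andbF ?andbT ?orbF.
have [IH1 IH2 IH3] : [/\ Dv (foldl stp st0 L) t = Dv st0 t,
      NHv (foldl stp st0 L) t = (NHv st0 t :\: [set u | (u, t) \in L]) :|:
          [set u | ((u, t) \in L) && (Dv (net u) t + (w u v)%:E == Dv st0 t)%E] &
      PHv (foldl stp st0 L) t = (PHv st0 t :\: [set u | (u, t) \in L]) :|:
          [set u | [&& (u, t) \in L, ~~ (Dv (net u) t + (w u v)%:E == Dv st0 t)%E &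
                      (Dv (net u) t - (w u v)%:E == Dv st0 t)%E]]].
  by apply: IH => u0 h; apply: hL; rewrite mem_rcons inE h orbT.
rewrite foldl_rcons; set st := foldl stp st0 L in IH1 IH2 IH3 *.
rewrite /stp /= pD pNH pPH.
case: (eqVneq t t') => [et|ht]; last first.
  rewrite IH1 IH2 IH3; split => //; apply/setP => x; rewrite !inE /=;
  by rewrite mem_rcons inE xpair_eqE (negbTE ht) andbF.
subst t'; rewrite IH1.
have hc1 : (Dv (net u) t + (w u v)%:E < Dv st0 t)%E = false.
  by apply/negbTE; apply: hL; rewrite mem_rcons mem_head.
rewrite hc1; split => //.
  rewrite IH2; apply/setP => x; rewrite !inE mem_rcons inE xpair_eqE eqxx andbT.
  case: (eqVneq x u) => [->|hxu] /=.
    by case: ifP => h; rewrite !inE ?eqxx ?h //= ?orbF ?andbF.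
  by case: ifP => h; rewrite !inE (negbTE hxu) /=.
rewrite IH3; apply/setP => x.
case: ifP => h2; [|case: ifP => h3]; rewrite !inE mem_rcons inE xpair_eqE eqxx andbT;
case: (eqVneq x u) => [->|hxu] /=; rewrite ?h2 ?h3 ?andbF ?orbF //=.
Qed.

End Fold.
Section Run.
Variables (C0 : V -> R) (sched : nat -> V -> seq (V * V)).
Hypothesis hsched : forall k v, perm_eq (sched k v) (inbox adj v).
Hypothesis hV : (1 < #|V|)%N.

Local Notation st k v := (run w C0 sched k v).

Lemma runS k v : st k.+1 v = foldl (stp (run w C0 sched k) v) (st k v) (sched k v).
Proof. by []. Qed.

Lemma mem_sched k v u t : ((u, t) \in sched k v) = adj v u.
Proof.
rewrite (perm_mem (hsched k v)) /inbox mem_filter /=.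
case: (adj v u) => //=.
by apply: (allpairs_f (fun a b => (a, b))); rewrite mem_enum.
Qed.

Lemma all_sched k v : all (fun ut => adj v ut.1) (sched k v).
Proof. by apply/allP => [[u t]]; rewrite mem_sched. Qed.

Lemma has_sched k v t : hasT t (sched k v).
Proof.
have [u hu] := has_neighbor v hV.
by apply/hasP; exists (u, t); rewrite ?mem_sched //=.
Qed.

Lemma sched_nil k v : sched k v != [::].
Proof. by have := has_sched k v v; case: (sched k v). Qed.

Lemma inv_sub k v t :
  NHv (st k v) t \subset [set u | adj v u] /\ PHv (st k v) t \subset [set u | adj v u].
Proof.
elim: k v t => [|k IH] v t; first by rewrite /= !sub0set.
have [[i1 i2 _ _ _] _] := fold_inv (run w C0 sched k) (all_sched k v)
   (fun t => (IH v t).1) (fun t => (IH v t).2).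
by rewrite runS; split.
Qed.

Lemma inv_Svv k v : Sv (st k v) v v = 1.
Proof.
elim: k v => [|k IH] v; first by rewrite /= eqxx.
have [_ [i6 _ _]] := fold_inv (run w C0 sched k) (all_sched k v)
   (fun t => (inv_sub k v t).1) (fun t => (inv_sub k v t).2).
by rewrite runS i6.
Qed.

Lemma D_lb k v t : ((dist v t)%:E <= Dv (st k v) t)%E.
Proof.
elim: k v t => [|k IH] v t.
  rewrite /=; case: eqP => [->|_]; last exact: leey.
  by rewrite dist_tt.
rewrite runS; apply: (fold_lb (lb := fun t => (dist v t)%:E)) => // u t' hu.
rewrite mem_sched in hu.
apply: le_trans (leeD2r _ (IH u t')).
rewrite -EFinD lee_fin -(w_sym hu) addrC; exact: dist_tri.
Qed.

Lemma D_ub k v t p : path adj v p -> last v p = t -> (size p <= k)%N ->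
  (Dv (st k v) t <= (plen v p)%:E)%E.
Proof.
elim: k v p => [|k IH] v p.
  by case: p => //= _ <- _; rewrite eqxx plen_nil.
rewrite runS; have [h1 h2] := fold_D (run w C0 sched k) v (st k v) (sched k v) t.
case: p => [|u q] /=.
  move=> _ ht _; apply: le_trans h1 _; exact: IH.
case/andP=> hvu hq hl hs.
apply: le_trans (h2 u _) _; first by rewrite mem_sched.
rewrite plen_cons (w_sym hvu) EFinD [X in (_ <= X)%E]addeC; apply: leeD2r; exact: IH.
Qed.

Lemma D_conv k v t : (maxhop adj w v t <= k)%N -> Dv (st k v) t = (dist v t)%:E.
Proof.
move=> hk; have [p hp hs] := SP_size_le v t.
have /and3P [hpp /eqP hlp _] := SP_spath hp.
apply/le_anti; rewrite D_lb andbT -(dist_SP hp).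
apply: D_ub => //; exact: leq_trans hs hk.
Qed.

Lemma notlt_conv k v t u : (maxhop adj w v t <= k)%N -> adj v u ->
  ~~ (Dv (st k u) t + (w u v)%:E < Dv (st k v) t)%E.
Proof.
move=> hk hu; rewrite -leNgt (D_conv hk).
apply: le_trans (leeD2r _ (D_lb k u t)).
rewrite -EFinD lee_fin -(w_sym hu) addrC; exact: dist_tri.
Qed.

Lemma NH_conv k v t : (maxhop adj w v t <= k)%N -> NHv (st k.+1 v) t = NHs t v.
Proof.
move=> hk; rewrite runS.
have [_ -> _] := @fold_conv (run w C0 sched k) v (st k v) (sched k v) t
   (fun u hu => notlt_conv hk (etrans (esym (mem_sched k v u t)) hu)).
have hsub := (inv_sub k v t).1.
apply/setP => x; rewrite inNH !inE !mem_sched (D_conv hk).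
case: (boolP (adj v x)) => hx /=; last first.
  rewrite orbF; apply/negbTE/negP => hx'; have := subsetP hsub x hx'.
  by rewrite inE (negbTE hx).
apply/idP/idP => h.
    have hD : Dv (st k x) t = (dist x t)%:E.
      move: h (D_lb k x t); case: (Dv (st k x) t) => [r| |] //=.
      rewrite -EFinD eqe lee_fin => /eqP e hr.
      have := dist_tri t hx; rewrite (w_sym hx); move: e.
      have := w_pos hx => hw e htri.
      by congr (_%:E); lra.
    by move: h; rewrite hD -EFinD eqe.
  have hlt : (maxhop adj w x t <= k)%N.
    have hxN : x \in NHs t v by rewrite inNH hx.
    have := mh_NH hxN; lia.
  by rewrite (D_conv hlt) -EFinD eqe.
Qed.

Lemma PH_conv k v t : (diamD adj w <= k)%N -> PHv (st k.+1 v) t = PHs t v.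
Proof.
move=> hk; have hconv : forall y, Dv (st k y) t = (dist y t)%:E.
  by move=> y; apply: D_conv; apply: leq_trans (mh_le_D _ _) hk.
rewrite runS.
have hmv : (maxhop adj w v t <= k)%N by apply: leq_trans (mh_le_D _ _) hk.
have [_ _ ->] := @fold_conv (run w C0 sched k) v (st k v) (sched k v) t
   (fun u hu => notlt_conv hmv (etrans (esym (mem_sched k v u t)) hu)).
have hsub := (inv_sub k v t).2.
apply/setP => x; rewrite inPH !inE !mem_sched !hconv.
case: (boolP (adj v x)) => hx /=; last first.
  rewrite orbF; apply/negbTE/negP => hx'; have := subsetP hsub x hx'.
  by rewrite inE (negbTE hx).
rewrite -EFinD -EFinB !eqe.
  have hw : 0 < w x v by rewrite -(w_sym hx) w_pos.
  apply/idP/idP; first by case/andP.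
  move=> /eqP h; rewrite h eqxx andbT; apply/eqP => e; lra.
Qed.

Lemma S_phase k v t : t != v ->
  Sv (st k.+1 v) v t = \sum_(x in NHv (st k.+1 v) t) Sv (st k x) x t.
Proof.
move=> htv.
have [[i1 _ i3 _ i5] _] := fold_inv (run w C0 sched k) (all_sched k v)
   (fun t => (inv_sub k v t).1) (fun t => (inv_sub k v t).2).
rewrite runS i5 ?has_sched //; apply: eq_bigr => x hx.
have hxa : adj v x by move: (subsetP (i1 t) x hx); rewrite inE.
have hxv : x != v by apply/eqP => e; move: hxa; rewrite e adj_irr.
by rewrite i3 // mem_sched hxa.
Qed.

Lemma B_phase k v t :
  Bv (st k.+1 v) v t = Sv (st k.+1 v) v t * \sum_(x in PHv (st k.+1 v) t)
     (if Sv (st k x) x t == 0 then 0 else (Bv (st k x) x t + 1) / Sv (st k x) x t).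
Proof.
have [[_ i2 i3 i4 _] [_ i7 _]] := fold_inv (run w C0 sched k) (all_sched k v)
   (fun t => (inv_sub k v t).1) (fun t => (inv_sub k v t).2).
rewrite runS i7 ?has_sched //; congr (_ * _); apply: eq_bigr => x hx.
have hxa : adj v x by move: (subsetP (i2 t) x hx); rewrite inE.
have hxv : x != v by apply/eqP => e; move: hxa; rewrite e adj_irr.
by rewrite /fS i3 // i4 // mem_sched hxa.
Qed.

Lemma C_phase k v : Cv (st k.+1 v) = \sum_(x | x != v) Bv (st k.+1 v) v x.
Proof.
have [_ [_ _ i8]] := fold_inv (run w C0 sched k) (all_sched k v)
   (fun t => (inv_sub k v t).1) (fun t => (inv_sub k v t).2).
by rewrite runS i8 // sched_nil.
Qed.

Lemma S_correct k v t : (v == t) || (maxhop adj w v t < k)%N ->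
  Sv (st k v) v t = (sigma adj w v t)%:R.
Proof.
elim: k v => [|k IH] v.
  by rewrite orbF => /eqP <-; rewrite inv_Svv sigma_tt.
case: (eqVneq v t) => [<- _|hvt]; first by rewrite inv_Svv sigma_tt.
rewrite orFb ltnS => hk.
rewrite S_phase 1?eq_sym // NH_conv // sigma_rec // natr_sum.
apply: eq_bigr => x hx; apply: IH.
case: (eqVneq x t) => //= _; have := mh_NH hx; lia.
Qed.

Lemma B_correct k v t : v != t ->
  (2 * diamD adj w + 2 <= k + maxhop adj w v t)%N -> Bv (st k v) v t = delta t v.
Proof.
elim: k v => [|k IH] v hvt hk.
  by have := mh_le_D v t; lia.
have hD := mh_le_D v t.
have hkD : (diamD adj w <= k)%N by lia.
have hmv : (maxhop adj w v t <= k)%N by lia.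
rewrite B_phase PH_conv // (S_correct (k := k.+1)); last by rewrite ltnS hmv orbT.
rewrite brandes //; congr (_ * _); apply: eq_bigr => x hx.
have hxt := PH_neq_t hx.
have hxD := mh_le_D x t.
have hmx := mh_PH hx.
rewrite (S_correct (k := k)); last by apply/orP; right; lia.
rewrite (negbTE (sigma_neq0 x t)) IH //; lia.
Qed.

Lemma main_C k v : (2 * diamD adj w + 1 <= k)%N ->
  Cv (st k v) = \sum_(t | t != v) delta t v.
Proof.
case: k => [|k] hk; first lia.
rewrite C_phase; apply: eq_bigr => t htv.
apply: B_correct; first by rewrite eq_sym.
have : (0 < maxhop adj w v t)%N.
  have [p hp _] := SP_size_le v t.
  apply: leq_trans (mh_ge hp).
  have /and3P [_ /eqP hl _] := SP_spath hp.
  by case: p hp hl => [|? ?] //= _ e; move: htv; rewrite -e eqxx.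
lia.
Qed.

End Run.
End Graph1.

Theorem theorem1 (R : realFieldType) (V : finType) (adj : rel V)
    (w : V -> V -> R) (C0 : V -> R) (sched : nat -> V -> seq (V * V)) :
  symmetric adj -> irreflexive adj ->
  (forall u v, adj u v -> w u v = w v u) ->
  (forall u v, adj u v -> 0 < w u v) ->
  (forall s t, connect adj s t) ->
  (2 < #|V|)%N ->
  (forall k v, perm_eq (sched k v) (inbox adj v)) ->
  forall k, (2 * diamD adj w + 1 <= k)%N ->
  forall v : V,
    Cv (run w C0 sched k v) = \sum_(s | s != v) bcs adj w v s /\
    Cv (run w C0 sched k v) = ((#|V| - 1) * (#|V| - 2))%:R * bc adj w v.
Proof.
move=> hsym hirr hwsym hwpos hconn hV hsched k hk v.
have hC := main_C hsym hirr hwsym hwpos hconn C0 hsched (ltnW hV) v hk.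
have h1 : Cv (run w C0 sched k v) = \sum_(s | s != v) bcs adj w v s.
  rewrite hC /bcs exchange_big /=; apply: eq_bigr => t _.
  by rewrite /delta.
split => //.
rewrite /bc mulrA mulfV ?mul1r -?h1 //.
rewrite pnatr_eq0 muln_eq0 negb_or; apply/andP; split; apply/eqP; lia.
Qed.
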